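(* Let $d\ge 4$. If every configuration in $Q^3_d$ of type $\varphi_1$, $\varphi_2$, $\varphi_3$ or $\varphi_4$ is covered, then $Q^3_d$ is loose Hamilton connected.
   Context: $Q^3_d$ is the $3$-uniform hypergraph on $V_d=\{0,1,2\}^d$ whose edges are the triples of pairwise distinct sequences agreeing in $d-1$ coordinates. A loose path from $v_0$ to $v_{2\ell}$ consists of distinct vertices $v_0,\dots,v_{2\ell}$ and distinct edges $e_i=\{v_{2i-2},v_{2i-1},v_{2i}\}$, $i=1,\dots,\ell$. A hypergraph is loose Hamilton connected if for any two distinct vertices $a,b$ there is a loose path from $a$ to $b$ containing all vertices. A configuration is an ordered $4$-tuple $(a,b,x,y)$ of pairwise distinct vertices of $V_d$; it is covered if there is a loose path from $a$ to $b$ whose vertex set is exactly $V_d\setminus\{x,y\}$. For $v\in V_d$ write $v_i$ for its $i$-th coordinate and $v_{[k]}=(v_1,\dots,v_k)$. A symmetry is a bijection of $V_d$ obtained by permuting the coordinates and, independently in each coordinate, permuting the values $\{0,1,2\}$. A configuration $c=(a,b,x,y)$ is of a given type if, after applying some symmetry to all four vertices and possibly interchanging $x$ and $y$, the resulting configuration (still denoted $(a,b,x,y)$) satisfies: $\varphi_1$: $a_d=x_d=0$, $b_d=1$, $y_d=2$, $a_{[d-1]}\notin\{b_{[d-1]},x_{[d-1]},y_{[d-1]}\}$, and there is $i\in[d-1]$ with $b_i\in\{a_i,x_i,y_i\}$; $\varphi_2$: $a_d=b_d=0$, $x_d=1$, $y_d=2$, and either $a_{[d-1]}\notin\{b_{[d-1]},x_{[d-1]},y_{[d-1]}\}$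 or $b_{[d-1]}\notin\{a_{[d-1]},x_{[d-1]},y_{[d-1]}\}$, and there are two distinct $i,i'\in[d-1]$, $u\in\{a,b\}$, $w\in\{x,y\}$ with $u_i=w_i$ and $u_{i'}=w_{i'}$; $\varphi_3$: $a_d=x_d=0$, $b_d=y_d=1$, and there is $i\in[d-1]$ with $a_i=y_i$ or $b_i=x_i$; $\varphi_4$: $a_d=0$, $b_d=x_d=1$, $y_d=2$, $b_{[d-1]}\notin\{a_{[d-1]},x_{[d-1]},y_{[d-1]}\}$, and there is $i\in[d-1]$ with $a_i\in\{b_i,x_i,y_i\}$. *)

(* Defs.v *)
From mathcomp Require Import all_boot.
From mathcomp Require Import fingroup perm.
Set Implicit Arguments. Unset Strict Implicit. Unset Printing Implicit Defensive.

(* Vertices of Q^3_d: sequences in {0,1,2}^d, coordinates indexed by 'I_d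
   (paper's coordinate i corresponds to index i-1). *)
Definition vtx (d : nat) := {ffun 'I_d -> 'I_3}.

Definition is_edge d (u v w : vtx d) : bool :=
  [&& u != v, v != w, u != w &
      [exists i : 'I_d, forall j : 'I_d, (j != i) ==> (u j == v j) && (v j == w j)]].

(* loose path from a to b with vertex sequence p = [v_0; ...; v_{2l}]:
   distinct vertices, and {v_{2i}, v_{2i+1}, v_{2i+2}} edges.
   (Distinctness of the edges follows from distinctness of the vertices.) *)
Definition loose_path d (a b : vtx d) (p : seq (vtx d)) : bool :=
  [&& uniq p, odd (size p), nth a p 0 == a, last a p == b &
      all (fun i => is_edge (nth a p i.*2) (nth a p i.*2.+1) (nth a p i.*2.+2))
          (iota 0 (size p)./2)].

Definition loose_hamilton_connected d : Prop :=
  forall a b : vtx d, a != b ->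
    exists p, loose_path a b p /\ forall v : vtx d, v \in p.

Definition covered d (a b x y : vtx d) : Prop :=
  exists p, loose_path a b p /\ forall v : vtx d, (v \in p) = (v \notin [:: x; y]).

Definition pairwise_distinct4 d (a b x y : vtx d) : Prop :=
  [&& a != b, a != x, a != y, b != x, b != y & x != y].

Definition sym d (sigma : {perm 'I_d}) (pi : 'I_d -> {perm 'I_3}) (v : vtx d) : vtx d :=
  [ffun j => pi j (v (sigma j))].

Definition word d (v : vtx d) : seq nat := [seq nat_of_ord (v i) | i <- enum 'I_d].
(* c v k = v_{k+1} in the paper's 1-based notation *)
Definition c d (v : vtx d) (k : nat) : nat := nth 0 (word v) k.
Definition lastc d (v : vtx d) : nat := c v d.-1.
Definition pre d (v : vtx d) : seq nat := take d.-1 (word v).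

Definition phi1 d (a b x y : vtx d) : Prop :=
  [/\ [/\ lastc a = 0, lastc x = 0, lastc b = 1 & lastc y = 2],
      pre a \notin [:: pre b; pre x; pre y] &
      exists i, i < d.-1 /\ c b i \in [:: c a i; c x i; c y i]].

Definition phi2 d (a b x y : vtx d) : Prop :=
  [/\ [/\ lastc a = 0, lastc b = 0, lastc x = 1 & lastc y = 2],
      (pre a \notin [:: pre b; pre x; pre y]) \/ (pre b \notin [:: pre a; pre x; pre y]) &
      exists i i' (u w : vtx d), [/\ [/\ i < d.-1, i' < d.-1 & i <> i'],
         u \in [:: a; b], w \in [:: x; y] & c u i = c w i /\ c u i' = c w i']].

Definition phi3 d (a b x y : vtx d) : Prop :=
  [/\ lastc a = 0, lastc x = 0, lastc b = 1, lastc y = 1 &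
      exists i, i < d.-1 /\ (c a i = c y i \/ c b i = c x i)].

Definition phi4 d (a b x y : vtx d) : Prop :=
  [/\ [/\ lastc a = 0, lastc b = 1, lastc x = 1 & lastc y = 2],
      pre b \notin [:: pre a; pre x; pre y] &
      exists i, i < d.-1 /\ c a i \in [:: c b i; c x i; c y i]].

Definition of_type d (phi : vtx d -> vtx d -> vtx d -> vtx d -> Prop)
    (a b x y : vtx d) : Prop :=
  exists (sigma : {perm 'I_d}) (pi : 'I_d -> {perm 'I_3}),
    let f := sym sigma pi in phi (f a) (f b) (f x) (f y) \/ phi (f a) (f b) (f y) (f x).

(* Main.v *)
Require Import Defs.
From mathcomp Require Import all_boot.
From mathcomp Require Import fingroup perm.
From mathcomp Require Import zify.
Set Implicit Arguments. Unset Strict Implicit. Unset Printing Implicit Defensive.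

Lemma c_ord d (v : vtx d) (i : 'I_d) : c v i = v i.
Proof. rewrite /c /word (nth_map i) ?size_enum_ord //; congr (nat_of_ord (v _)); apply: val_inj; by rewrite /= nth_enum_ord. Qed.

Lemma lastc_ord d (v : vtx d) (m : 'I_d) : val m = d.-1 -> lastc v = v m.
Proof. by move=> hm; rewrite /lastc -hm c_ord. Qed.

Lemma pre_neq d (v w : vtx d) (i : 'I_d) : i < d.-1 -> v i != w i -> pre v != pre w.
Proof.
move=> hi hne; apply/eqP => E.
have := congr1 (fun s => nth 0 s i) E; rewrite /= /pre !nth_take //.
rewrite -/(c v i) -/(c w i) !c_ord => /val_inj /eqP; by rewrite (negbTE hne).
Qed.

Definition line d (b : vtx d) (j : 'I_d) (t : 'I_3) : vtx d :=
  [ffun i => if i == j then t else b i].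

Lemma line_j d (b : vtx d) j t : line b j t j = t.
Proof. by rewrite ffunE eqxx. Qed.
Lemma line_k d (b : vtx d) j t k : k != j -> line b j t k = b k.
Proof. by move=> h; rewrite ffunE (negbTE h). Qed.
Lemma line_self d (b : vtx d) j : line b j (b j) = b.
Proof. apply/ffunP => i; rewrite ffunE; by case: eqP => // ->. Qed.
Lemma line_neq d (b : vtx d) j t1 t2 : t1 != t2 -> line b j t1 != line b j t2.
Proof. apply: contra => /eqP E; have := congr1 (fun f : vtx d => f j) E; by rewrite !line_j => ->. Qed.
Lemma line_edge d (b : vtx d) j t1 t2 t3 : t1 != t2 -> t2 != t3 -> t1 != t3 ->
  is_edge (line b j t1) (line b j t2) (line b j t3).
Proof.
move=> h1 h2 h3; rewrite /is_edge !line_neq //=; apply/existsP; exists j.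
apply/forallP => i; apply/implyP => hij; by rewrite !ffunE (negbTE hij) !eqxx.
Qed.

Lemma path_app d (a z u w : vtx d) p : loose_path a z p -> is_edge z u w ->
  uniq (p ++ [:: u; w]) -> loose_path a w (p ++ [:: u; w]).
Proof.
case/and5P => hu hodd h0 hl hall he hu'.
have hp : 0 < size p by case: (size p) hodd.
have [n hn] : exists n, size p = n.*2.+1.
  exists (size p)./2; by rewrite -[in LHS](odd_double_half (size p)) hodd add1n.
have e1 : (n.*2.+1)./2 = n by rewrite -[n.*2.+1]/(true + n.*2) half_bit_double.
rewrite hn e1 in hall.
apply/and5P; split => //.
- by rewrite size_cat addn2 /= negbK.
- by rewrite nth_cat hp.
- by rewrite last_cat.
have -> : (size (p ++ [:: u; w]))./2 = n.+1.
  by rewrite size_cat hn addn2 -doubleS -[_.+1.*2.+1]/(true + n.+1.*2) half_bit_double.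
rewrite -addn1 iotaD all_cat /=; apply/andP; split.
  apply/allP => i; rewrite mem_iota add0n => hi; move/allP: hall => /(_ i).
  rewrite mem_iota add0n hi => /(_ isT).
  have h2 : i.*2.+2 < size p by rewrite hn ltnS -doubleS leq_double.
  rewrite !nth_cat h2 (ltnW h2) (ltnW (ltnW h2)) //.
rewrite andbT add0n !nth_cat hn ltnSn ltnn ltnNge leqnSn /= subnn.
idtac.
rewrite subSn // subnn /=.
have := nth_last a p; rewrite hn /= => ->; by rewrite (eqP hl).
Qed.

Lemma cover3 (u v w t : 'I_3) : u != v -> v != w -> u != w -> [|| t == u, t == v | t == w].
Proof. by move: u v w t; do 4 case=> [[|[|[|//]]] ?]. Qed.

Lemma perm3 (u v w : 'I_3) : u != v -> v != w -> u != w ->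
  exists P : {perm 'I_3}, [/\ nat_of_ord (P u) = 0, nat_of_ord (P v) = 1 & nat_of_ord (P w) = 2].
Proof.
move=> h1 h2 h3.
pose g := fun t : 'I_3 => if t == u then (inord 0 : 'I_3) else if t == v then inord 1 else inord 2.
pose h := fun n : 'I_3 => if nat_of_ord n == 0 then u else if nat_of_ord n == 1 then v else w.
have gK : cancel g h.
  move=> t; rewrite /g /h; case/or3P: (cover3 t h1 h2 h3) => /eqP ->.
  - by rewrite eqxx inordK.
  - by rewrite (eq_sym v u) (negbTE h1) eqxx inordK.
  - by rewrite (eq_sym w u) (negbTE h3) (eq_sym w v) (negbTE h2) inordK.
exists (perm (can_inj gK)); rewrite !permE /g eqxx (eq_sym v u) (negbTE h1) eqxx
  (eq_sym w u) (negbTE h3) (eq_sym w v) (negbTE h2) !inordK //.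
Qed.

Definition o0 : 'I_3 := @Ordinal 3 0 isT.
Definition o1 : 'I_3 := @Ordinal 3 1 isT.
Definition o2 : 'I_3 := @Ordinal 3 2 isT.

Lemma triple (t0 bj : 'I_3) : exists tz ty : 'I_3,
  [/\ tz != t0, ty != t0, tz != ty, bj != tz & (bj == t0) || (bj == ty)].
Proof.
case: t0 => [[|[|[|//]]] h0]; case: bj => [[|[|[|//]]] h1];
first [ by exists o0, o1 | by exists o0, o2 | by exists o1, o0
      | by exists o1, o2 | by exists o2, o0 | by exists o2, o1 ].
Qed.

Theorem proposition1p6 (d : nat) (hd : 4 <= d) :
  (forall a b x y : vtx d, pairwise_distinct4 a b x y ->
     (of_type (@phi1 d) a b x y \/ of_type (@phi2 d) a b x y \/
      of_type (@phi3 d) a b x y \/ of_type (@phi4 d) a b x y) ->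
     covered a b x y) ->
  loose_hamilton_connected d.
Proof.
move=> H a b hab.
have [k hk] : exists k, a k != b k.
  apply/existsP; apply: contraNT hab => /existsPn Hn; apply/eqP/ffunP => i.
  by apply/eqP; move: (Hn i); rewrite negbK.
have hd0 : 0 < d by apply: leq_trans hd.
have hd1 : 1 < d by apply: leq_trans hd.
have hdm : d.-1 < d by rewrite prednK.
pose m := Ordinal hdm.
pose j : 'I_d := if k == Ordinal hd0 then Ordinal hd1 else Ordinal hd0.
have hjk : j != k.
  rewrite /j; case: (eqVneq k (Ordinal hd0)) => [->|hne] //; by rewrite eq_sym.
have hjm : j != m.
  apply/eqP => /(congr1 val); rewrite /j /=; case: (k == _) => /=;
  by move: hd; case: d {H a b hab k hk hd0 hd1 hdm m j hjk} => [|[|[|[|dd]]]].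
have [tz [ty [hz0 hy0 hzy hbz hb]]] := triple (a j) (b j).
have hz0' : a j != tz by rewrite eq_sym.
have hy0' : a j != ty by rewrite eq_sym.
have [P [P0 P1 P2]] := perm3 hz0' hzy hy0'.
pose sigma := tperm j m.
pose pi := fun i : 'I_d => if i == m then P else 1%g.
pose f := sym sigma pi.
have fm v : f v m = P (v j) by rewrite /f /sym ffunE /pi eqxx /sigma tpermR.
have hsk : sigma k != m.
  apply/eqP => E; have := congr1 sigma E; rewrite /sigma tpermK tpermR => E'.
  by move: hjk; rewrite E' eqxx.
have fk v : f v (sigma k) = v k.
  by rewrite /f /sym ffunE /pi (negbTE hsk) perm1 /sigma tpermK.
have hskd : sigma k < d.-1.
  have h1 := ltn_ord (sigma k).
  have h2 : nat_of_ord (sigma k) != d.-1 by apply: contra hsk => /eqP E; apply/eqP; apply: val_inj.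
  move: h1 h2; set q := nat_of_ord _; lia.
have hkj : k != j by rewrite eq_sym.
have ha t : a != line b j t.
  apply: contra hk => /eqP ->; by rewrite line_k.
set x := line b j (a j); set z := line b j tz; set y := line b j ty.
have hcov : covered a z x y.
  apply: H.
    rewrite /pairwise_distinct4 !ha !line_neq //.
  left; exists sigma, pi; left; rewrite -/f /x /y /z.
  split.
  - by split; rewrite (lastc_ord _ (m:=m)) // fm ?line_j ?P0 ?P1 ?P2.
  - rewrite !inE !negb_or; apply/and3P; split; apply: (pre_neq (i:=sigma k)) => //;
    by rewrite !fk !(line_k _ _ hkj).
  - exists (nat_of_ord (sigma k)); split => //.
    by rewrite !c_ord !fk !(line_k _ _ hkj) !in_cons eqxx !orbT.
case: hcov => p [hp hmem].
have hu : uniq p by case/and5P: (hp).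
have hx : x \notin p by rewrite hmem !inE eqxx.
have hy : y \notin p by rewrite hmem !inE eqxx orbT.
have hxy : x != y by rewrite line_neq.
case/orP: hb => /eqP hbj.
- have ebx : x = b by rewrite /x -hbj line_self.
  exists (p ++ [:: y; x]); split.
    rewrite -ebx; apply: (path_app hp); first by apply: line_edge.
    by rewrite cat_uniq hu /= !inE (negbTE hx) (negbTE hy) eq_sym hxy.
  move=> v; rewrite mem_cat hmem !inE.
  by case: (v == x); case: (v == y).
- have eby : y = b by rewrite /y -hbj line_self.
  exists (p ++ [:: x; y]); split.
    rewrite -eby; apply: (path_app hp); first by apply: line_edge.
    by rewrite cat_uniq hu /= !inE (negbTE hx) (negbTE hy) hxy.
  move=> v; rewrite mem_cat hmem !inE.
  by case: (v == x); case: (v == y).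
Qed.
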